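(* Let $\mathbb{K}\in\{\mathbb{R},\mathbb{C}\}$, $\mathbf{R}_U\in\mathbb{K}^{n\times n}$ self-adjoint positive definite, $U:=\mathbb{K}^n$ with $\langle\mathbf{x},\mathbf{y}\rangle_U:=\langle\mathbf{R}_U\mathbf{x},\mathbf{y}\rangle$ and norm $\|\cdot\|_U$. Fix $\mu$, $\mathbf{A}(\mu)\in\mathbb{K}^{n\times n}$, $\mathbf{b}(\mu)\in\mathbb{K}^n$, $\mathbf{u}(\mu)$ with $\mathbf{A}(\mu)\mathbf{u}(\mu)=\mathbf{b}(\mu)$, a subspace $U_r\subseteq U$, and $\mathbf{\Theta}\in\mathbb{K}^{k\times n}$. For $\mathbf{y}\in\mathbb{K}^n$ let $$\|\mathbf{y}\|_{U_r'}^{\mathbf{\Theta}}:=\max_{\mathbf{x}\in U_r\setminus\{\mathbf{0}\}}\frac{|\langle\mathbf{\Theta}\mathbf{R}_U^{-1}\mathbf{y},\mathbf{\Theta}\mathbf{x}\rangle|}{\|\mathbf{\Theta}\mathbf{x}\|},$$ $$\alpha_r^{\mathbf{\Theta}}(\mu):=\min_{\mathbf{x}\in U_r\setminus\{\mathbf{0}\}}\frac{\|\mathbf{A}(\mu)\mathbf{x}\|_{U_r'}^{\mathbf{\Theta}}}{\|\mathbf{x}\|_U},\qquad\beta_r^{\mathbf{\Theta}}(\mu):=\max_{\mathbf{x}\in(\mathrm{span}\{\mathbf{u}(\mu)\}+U_r)\setminus\{\mathbf{0}\}}\frac{\|\mathbf{A}(\mu)\mathbf{x}\|_{U_r'}^{\mathbf{\Theta}}}{\|\mathbf{x}\|_U}.$$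 Let $\mathbf{u}_r(\mu)\in U_r$ satisfy $\|\mathbf{b}(\mu)-\mathbf{A}(\mu)\mathbf{u}_r(\mu)\|_{U_r'}^{\mathbf{\Theta}}=0$. If $\alpha_r^{\mathbf{\Theta}}(\mu)>0$, then $$\|\mathbf{u}(\mu)-\mathbf{u}_r(\mu)\|_U\le\Big(1+\frac{\beta_r^{\mathbf{\Theta}}(\mu)}{\alpha_r^{\mathbf{\Theta}}(\mu)}\Big)\|\mathbf{u}(\mu)-\mathbf{P}_{U_r}\mathbf{u}(\mu)\|_U,$$ where $\mathbf{P}_{U_r}$ is the $\langle\cdot,\cdot\rangle_U$-orthogonal projection onto $U_r$.
   Context: $\langle\mathbf{x},\mathbf{y}\rangle=\mathbf{x}^{\mathrm{H}}\mathbf{y}$ is the canonical inner product and $\|\cdot\|$ the Euclidean norm. The semi-norm $\|\cdot\|_{U_r'}^{\mathbf{\Theta}}$ is understood to be used where it is well defined, i.e., when $\mathbf{\Theta}\mathbf{x}\neq\mathbf{0}$ for all nonzero $\mathbf{x}\in U_r$. *)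

(* Defs.v *)
From HB Require Import structures.
From mathcomp Require Import all_boot all_order all_algebra.
From mathcomp Require Import reals.
From mathcomp Require Import complex.
Set Implicit Arguments. Unset Strict Implicit. Unset Printing Implicit Defensive.
Import Order.TTheory GRing.Theory Num.Theory.
Local Open Scope ring_scope.

Section Generic.
(* K is the scalar field (R or C); cj its conjugation (identity over R),
   sq the nonnegative square root used for Euclidean-type norms. *)
Variables (K : numFieldType) (cj : K -> K) (sq : K -> K).

Definition dotK n (x y : 'cV[K]_n) : K := ((map_mx cj x)^T *m y) 0 0.
Definition enorm n (x : 'cV[K]_n) : K := sq (dotK x x).

Definition selfadjoint n (M : 'M[K]_n) : Prop := map_mx cj M^T = M.
Definition posdef n (M : 'M[K]_n) : Prop :=
  forall x : 'cV[K]_n, x != 0 -> 0 < dotK (M *m x) x.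

Definition innerU n (RU : 'M[K]_n) (x y : 'cV[K]_n) : K := dotK (RU *m x) y.
Definition normU n (RU : 'M[K]_n) (x : 'cV[K]_n) : K := sq (innerU RU x x).

Definition is_maxK (S : K -> Prop) (m : K) : Prop := S m /\ forall s, S s -> s <= m.
Definition is_minK (S : K -> Prop) (m : K) : Prop := S m /\ forall s, S s -> m <= s.

Definition dual_ratios n k (RU : 'M[K]_n) (Theta : 'M[K]_(k, n))
  (Ur : {vspace 'cV[K]_n}) (y : 'cV[K]_n) : K -> Prop :=
  fun r => exists x : 'cV[K]_n, [/\ x \in Ur, x != 0 &
     r = `|dotK (Theta *m (invmx RU *m y)) (Theta *m x)| / enorm (Theta *m x)].

Definition is_dual_seminorm n k (RU : 'M[K]_n) (Theta : 'M[K]_(k, n))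
  (Ur : {vspace 'cV[K]_n}) (dn : 'cV[K]_n -> K) : Prop :=
  forall y, is_maxK (dual_ratios RU Theta Ur y) (dn y).

Definition stab_ratios n (RU : 'M[K]_n) (dn : 'cV[K]_n -> K) (A : 'M[K]_n)
  (V : {vspace 'cV[K]_n}) : K -> Prop :=
  fun r => exists x : 'cV[K]_n, [/\ x \in V, x != 0 & r = dn (A *m x) / normU RU x].

Definition is_Uproj n (RU : 'M[K]_n) (Ur : {vspace 'cV[K]_n}) (v p : 'cV[K]_n) : Prop :=
  p \in Ur /\ forall x, x \in Ur -> innerU RU x (v - p) = 0.

Definition prop41_stmt : Prop :=
  forall (n k : nat) (RU : 'M[K]_n) (A : 'M[K]_n) (b u : 'cV[K]_n)
    (Ur : {vspace 'cV[K]_n}) (Theta : 'M[K]_(k, n)),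
  selfadjoint RU -> posdef RU ->
  A *m u = b ->
  (* the semi-norm is well defined: Theta injective on U_r *)
  (forall x, x \in Ur -> x != 0 -> Theta *m x != 0) ->
  forall dn : 'cV[K]_n -> K, is_dual_seminorm RU Theta Ur dn ->
  forall alpha, is_minK (stab_ratios RU dn A Ur) alpha ->
  forall beta, is_maxK (stab_ratios RU dn A (<[u]> + Ur)%VS) beta ->
  forall ur, ur \in Ur -> dn (b - A *m ur) = 0 ->
  forall Pu, is_Uproj RU Ur u Pu ->
  0 < alpha ->
  normU RU (u - ur) <= (1 + beta / alpha) * normU RU (u - Pu).

End Generic.

(* Main.v *)
Require Import Defs.
From HB Require Import structures.
From mathcomp Require Import all_boot all_order all_algebra.
From mathcomp Require Import reals complex.
From mathcomp Require Import ring lra.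
Import Order.TTheory GRing.Theory Num.Theory.
Local Open Scope ring_scope.

Section Gen.
Variables (K : numFieldType) (cj : {rmorphism K -> K}) (sq : K -> K).
Hypothesis cjK : forall z, cj (cj z) = z.
Hypothesis cj_norm : forall z, cj z * z = `|z| ^+ 2.
Hypothesis cj_re : forall z, z + cj z <= `|z| *+ 2.
Hypothesis sq_ge0 : forall x : K, 0 <= x -> 0 <= sq x.
Hypothesis sqK : forall x : K, 0 <= x -> sq x ^+ 2 = x.

Lemma sq_sqr (t : K) : 0 <= t -> sq (t ^+ 2) = t.
Proof.
move=> t0; have s0 : 0 <= t ^+ 2 by rewrite exprn_ge0.
apply: (pexpIrn (n:=2)) => //; rewrite ?nnegrE ?sq_ge0 //.
by rewrite sqK.
Qed.

Lemma sq_le (a b : K) : 0 <= a -> a <= b -> sq a <= sq b.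
Proof.
move=> a0 ab; have b0 : 0 <= b by apply: le_trans ab.
by rewrite -ler_sqr ?nnegrE ?sq_ge0 // !sqK.
Qed.

Lemma sq0 : sq 0 = 0.
Proof. have h0 : (0:K) <= 0 by []. by move: (@sq_sqr 0 h0); rewrite expr0n. Qed.

Lemma sq_gt0 (a : K) : 0 < a -> 0 < sq a.
Proof.
move=> a0; rewrite lt_def sq_ge0 ?ltW // andbT.
by apply/eqP => h; move: (@sqK a (ltW a0)); rewrite h expr0n /= => h'; rewrite -h' ltxx in a0.
Qed.

Variable n : nat.
Variable RU : 'M[K]_n.
Hypothesis RUsa : selfadjoint cj RU.
Hypothesis RUpd : posdef cj RU.

Local Notation h := (innerU cj RU).

Lemma hE x y : h x y = (((map_mx cj x)^T *m RU) *m y) 0 0.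
Proof.
rewrite /innerU /dotK map_mxM trmx_mul [(map_mx cj RU)^T]map_trmx.
by move: RUsa; rewrite /selfadjoint => ->.
Qed.

Lemma hsym x y : h y x = cj (h x y).
Proof.
rewrite !hE.
transitivity ((map_mx cj (((map_mx cj x)^T *m RU) *m y)) 0 0); last by rewrite mxE.
rewrite !map_mxM.
rewrite -map_trmx.
have -> : map_mx cj (map_mx cj x) = x by apply/matrixP => i j; rewrite !mxE cjK.
set M := (x^T *m _ *m _).
transitivity (M^T 0 0); last by rewrite mxE.
rewrite /M !trmx_mul trmxK [(map_mx cj RU)^T]map_trmx.
move: RUsa; rewrite /selfadjoint => ->.
by rewrite mulmxA.
Qed.

Lemma hD2 x y z : h x (y + z) = h x y + h x z.
Proof. by rewrite /innerU /dotK mulmxDr mxE. Qed.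
Lemma hZ2 x a y : h x (a *: y) = a * h x y.
Proof. by rewrite /innerU /dotK -scalemxAr mxE. Qed.
Lemma hD1 x y z : h (x + y) z = h x z + h y z.
Proof. by rewrite hsym hD2 rmorphD -!hsym. Qed.
Lemma hZ1 a x y : h (a *: x) y = cj a * h x y.
Proof. by rewrite hsym hZ2 rmorphM -hsym. Qed.
Lemma h0 x : h x 0 = 0.
Proof. by rewrite /innerU /dotK mulmx0 mxE. Qed.
Lemma hgt0 x : x != 0 -> 0 < h x x.
Proof. exact: RUpd. Qed.
Lemma hge0 x : 0 <= h x x.
Proof. by case: (eqVneq x 0) => [->|/hgt0/ltW //]; rewrite h0. Qed.
Lemma hreal x : cj (h x x) = h x x.
Proof. by rewrite -hsym. Qed.

Lemma hexp a b x y : h (a *: x + b *: y) (a *: x + b *: y) =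
  cj a * a * h x x + cj a * b * h x y + cj b * a * h y x + cj b * b * h y y.
Proof. rewrite !hD1 !hD2 !hZ1 !hZ2; ring. Qed.

Lemma CS x y : `|h x y| <= sq (h x x) * sq (h y y).
Proof.
case: (eqVneq y 0) => [->|ny]; first by rewrite h0 normr0 mulr_ge0 // sq_ge0 // ?hge0.
have q0 := @hgt0 y ny.
set q := h y y in q0 *.
set c := h y x.
have hxy : h x y = cj c by rewrite /c hsym.
have := hge0 (q *: x + (- c) *: y).
rewrite hexp hxy -/c hreal rmorphN -/q.
have -> : q * q * h x x + q * - c * cj c + - cj c * q * c + - cj c * - c * q
   = q * (q * h x x - cj c * c) by ring.
rewrite pmulr_rge0 // subr_ge0 => Hle.
rewrite -ler_sqr ?nnegrE ?normr_ge0 ?mulr_ge0 ?sq_ge0 ?hge0 //.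
rewrite exprMn !sqK ?hge0 //.
have E : `|cj c| ^+ 2 = cj c * c by rewrite -cj_norm cjK mulrC.
by rewrite E (mulrC (h x x)).
Qed.

Lemma normU_tri x y : normU cj sq RU (x + y) <= normU cj sq RU x + normU cj sq RU y.
Proof.
rewrite /normU.
set sx := sq (h x x); set sy := sq (h y y).
have sx0 : 0 <= sx by rewrite sq_ge0 ?hge0.
have sy0 : 0 <= sy by rewrite sq_ge0 ?hge0.
rewrite -[X in _ <= X](@sq_sqr (sx + sy)) ?addr_ge0 //.
apply: sq_le; first exact: hge0.
rewrite hD1 !hD2 [h y x]hsym.
have -> : (sx + sy) ^+ 2 = h x x + h y y + (sx * sy) *+ 2.
  by rewrite sqrrD /sx /sy !sqK ?hge0 //; ring.
have -> : h x x + h x y + (cj (h x y) + h y y) = h x x + h y y + (h x y + cj (h x y)) by ring.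
rewrite lerD2l; apply: (le_trans (cj_re _)).
by rewrite lerMn2r /= CS.
Qed.

Lemma normU_gt0 x : x != 0 -> 0 < normU cj sq RU x.
Proof. by move=> nx; apply: sq_gt0; apply: hgt0. Qed.
Lemma normU_ge0 x : 0 <= normU cj sq RU x.
Proof. by apply: sq_ge0; apply: hge0. Qed.
Lemma normUN x : normU cj sq RU (- x) = normU cj sq RU x.
Proof. by rewrite /normU -scaleN1r hZ1 hZ2 rmorphN1 !mulN1r opprK. Qed.

End Gen.

Section Main.
Variables (K : numFieldType) (cj : {rmorphism K -> K}) (sq : K -> K).
Hypothesis cjK : forall z, cj (cj z) = z.
Hypothesis cj_norm : forall z, cj z * z = `|z| ^+ 2.
Hypothesis cj_re : forall z, z + cj z <= `|z| *+ 2.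
Hypothesis sq_ge0 : forall x : K, 0 <= x -> 0 <= sq x.
Hypothesis sqK : forall x : K, 0 <= x -> sq x ^+ 2 = x.

Lemma dotD1 m (a b c : 'cV[K]_m) : dotK cj (a + b) c = dotK cj a c + dotK cj b c.
Proof. by rewrite /dotK map_mxD linearD /= mulmxDl mxE. Qed.
Lemma dot0 m (c : 'cV[K]_m) : dotK cj 0 c = 0.
Proof. by rewrite /dotK map_mx0 trmx0 mul0mx mxE. Qed.
Lemma dot_ge0 m (v : 'cV[K]_m) : 0 <= dotK cj v v.
Proof.
rewrite /dotK mxE; apply: sumr_ge0 => i _.
by rewrite !mxE cj_norm exprn_ge0.
Qed.
Lemma enorm_ge0 m (v : 'cV[K]_m) : 0 <= enorm cj sq v.
Proof. exact/sq_ge0/dot_ge0. Qed.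

Theorem main_gen : prop41_stmt cj sq.
Proof.
move=> n k RU A b u Ur Theta sa pd Au inj dn Hdn alpha [Hain Hamin]
  beta [Hbin Hbmax] ur urin Hres Pu [Puin _] alpha0.
have dn_ge0 y : 0 <= dn y.
  have [[x [_ _ ->]] _] := Hdn y.
  by rewrite divr_ge0 ?normr_ge0 ?enorm_ge0.
have dn_sub y1 y2 : dn (y1 + y2) <= dn y1 + dn y2.
  have [[x [xin nx ->]] _] := Hdn (y1 + y2).
  rewrite !mulmxDr dotD1.
  apply: le_trans (_ : (`|dotK cj (Theta *m (invmx RU *m y1)) (Theta *m x)|
     + `|dotK cj (Theta *m (invmx RU *m y2)) (Theta *m x)|) / enorm cj sq (Theta *m x) <= _).
    by rewrite ler_wpM2r ?invr_ge0 ?enorm_ge0 ?ler_normD.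
  rewrite mulrDl; apply: lerD.
    by apply: (Hdn y1).2; exists x.
  by apply: (Hdn y2).2; exists x.
have dn0 : dn 0 = 0.
  apply/eqP; rewrite eq_le dn_ge0 andbT.
  have [[x [_ _ ->]] _] := Hdn 0.
  by rewrite !mulmx0 dot0 normr0 mul0r.
have nU0 : normU cj sq RU 0 = 0.
  by rewrite /normU (@h0 K cj n RU 0) (@sq0 K sq sq_ge0 sqK).
set N := normU cj sq RU (u - Pu).
have N0 : 0 <= N by exact: (@normU_ge0 K cj sq sq_ge0 n RU pd).
set w := Pu - ur.
have win : w \in Ur by rewrite memvB.
have step1 : normU cj sq RU w * alpha <= dn (A *m w).
  case: (eqVneq w 0) => [->|nw]; first by rewrite nU0 mul0r dn_ge0.
  have wp := @normU_gt0 K cj sq sq_ge0 sqK n RU pd w nw.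
  rewrite mulrC -ler_pdivlMr //; apply: Hamin; by exists w.
have step2 : dn (A *m w) <= dn (A *m (Pu - u)).
  have -> : A *m w = (b - A *m ur) + A *m (Pu - u).
    by rewrite /w -Au !mulmxBr [RHS]addrC addrA subrK.
  by apply: le_trans (dn_sub _ _) _; rewrite Hres add0r.
have step3 : dn (A *m (Pu - u)) <= beta * N.
  have -> : N = normU cj sq RU (Pu - u) by rewrite /N -opprB (@normUN K cj sq cjK n RU sa).
  case: (eqVneq (Pu - u) 0) => [->|nv]; first by rewrite mulmx0 dn0 nU0 mulr0.
  have vp := @normU_gt0 K cj sq sq_ge0 sqK n RU pd _ nv.
  rewrite -ler_pdivrMr //; apply: Hbmax; exists (Pu - u); split => //.
  by rewrite -[Pu - u]addrC memv_add ?memvN ?memv_line.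
have Hw : normU cj sq RU w <= beta / alpha * N.
  by rewrite mulrAC ler_pdivlMr //; apply: le_trans step1 (le_trans step2 step3).
have -> : u - ur = (u - Pu) + w by rewrite /w addrA subrK.
apply: le_trans (@normU_tri K cj sq cjK cj_norm cj_re sq_ge0 sqK n RU sa pd _ _) _.
by rewrite mulrDl mul1r lerD2l.
Qed.
End Main.

Theorem proposition4p1 :
  forall R : realType,
    prop41_stmt (K := R) id Num.sqrt /\
    prop41_stmt (K := R[i]) Num.conj sqrtC.
Proof.
move=> R; split.
- apply: (@main_gen R (idfun : {rmorphism R -> R}) Num.sqrt).
  + by [].
  + by move=> z /=; rewrite real_normK ?num_real // expr2.
  + by move=> z /=; rewrite -mulr2n lerMn2r ler_norm orbT.
  + by move=> x x0; rewrite sqrtr_ge0.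
  + by move=> x x0; rewrite sqr_sqrtr.
- apply: (@main_gen R[i] (Num.conj : {rmorphism R[i] -> R[i]}) sqrtC).
  + by move=> z; rewrite /= conjCK.
  + by move=> z; rewrite /= normCK mulrC.
  + move=> z /=; have := (leif_Re_Creal z).1.
    by rewrite ReE ler_pdivrMr // mulr_natr.
  + by move=> x x0; rewrite sqrtC_ge0.
  + by move=> x x0; rewrite sqrtCK.
Qed.
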